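(* Let $\alpha\ge\tfrac12$ and $1\le p<\infty$. There is a constant $C>0$ depending only on $\alpha$ and $p$ such that for every measurable $f$ on $\mathbb{R}_+$, $\sup_{y\in\mathbb{R}_+}\Big(\int_{\mathbb{R}_+}|f|^p\,\tau_y\mathbf{1}_{[0,1]}\,d\omega_\alpha\Big)^{1/p}\le C\,\|f\|_{p,\infty}.$
   Context: Fix $\alpha\geq\tfrac12$. The Bessel–Kingman hypergroup is $(\mathbb{R}_+,*_\alpha)$ with Haar measure $\omega_\alpha(dz)=z^{2\alpha+1}dz$ and, for $x,y>0$, $\varepsilon_x*_\alpha\varepsilon_y(f)=\int_{|x-y|}^{x+y}K_\alpha(x,y,z)f(z)z^{2\alpha+1}dz$ with $K_\alpha(x,y,z)=C_\Gamma\frac{[(z^2-(x-y)^2)((x+y)^2-z^2)]^{\alpha-1/2}}{(xyz)^{2\alpha}}$, $C_\Gamma=\frac{\Gamma(\alpha+1)}{\Gamma(1/2)\Gamma(\alpha+1/2)2^{2\alpha-1}}$; $\varepsilon_0$ is the identity. The translation is $\tau_yf(x)=\varepsilon_x*_\alpha\varepsilon_y(f)$ (so $\tau_0f=f$). Let $I_n=[n-1,n)$, $\omega_n=\omega_\alpha(I_n)$, and $\|f\|_{p,\infty}=\sup_{n\ge1}\big(\frac1{\omega_n}\int_{I_n}|f|^pd\omega_\alpha\big)^{1/p}$. *)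

(* Defs.v *)
From Stdlib Require Import Reals Lra List.
From Stdlib Require Import ClassicalEpsilon.
Open Scope R_scope.

(* x^a for x >= 0 (with 0^a = 0, used only for a > 0 or on x > 0) *)
Definition rpow (x a : R) : R := if Rle_dec x 0 then 0 else Rpower x a.

(* "Lebesgue outer measure of A is <= r" *)
Definition outer_le (A : R -> Prop) (r : R) : Prop :=
  forall eps, 0 < eps -> exists a b : nat -> R,
    (forall x, A x -> exists n, a n < x < b n) /\
    (forall n, a n <= b n) /\
    (forall N, sum_f_R0 (fun n => b n - a n) N <= r + eps).

Definition lmeasurable (A : R -> Prop) : Prop :=
  forall E r, outer_le E r ->
    exists r1 r2, outer_le (fun x => E x /\ A x) r1 /\
                  outer_le (fun x => E x /\ ~ A x) r2 /\ r1 + r2 <= r.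

Definition measurable_Rplus (f : R -> R) : Prop :=
  forall t, lmeasurable (fun x => 0 <= x /\ t < f x).

Definition ind (A : R -> Prop) (x : R) : R :=
  if excluded_middle_informative (A x) then 1 else 0.

Definition sval (s : list (R * (R -> Prop))) (x : R) : R :=
  fold_right (fun cA acc => fst cA * ind (snd cA) x + acc) 0 s.

(* "Lebesgue integral over D of the nonnegative function g is <= K":
   every nonnegative simple function below g on D has integral <= K. *)
Definition lint_le (D : R -> Prop) (g : R -> R) (K : R) : Prop :=
  forall s : list (R * (R -> Prop)),
    Forall (fun cA => 0 <= fst cA /\ lmeasurable (snd cA) /\
                      (forall x, snd cA x -> D x)) s ->
    (forall x, D x -> sval s x <= g x) ->
    exists rs : list R,
      Forall2 (fun cA r => fst cA = 0 \/ outer_le (snd cA) r) s rs /\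
      fold_right Rplus 0 (map (fun p => fst (fst p) * snd p) (combine s rs))
        <= K.

Definition lint_eq (D : R -> Prop) (g : R -> R) (v : R) : Prop :=
  lint_le D g v /\ forall K, lint_le D g K -> v <= K.

Definition lint_val (D : R -> Prop) (g : R -> R) : R :=
  epsilon (inhabits 0) (fun v => lint_eq D g v).

Definition Gamma (s : R) : R :=
  lint_val (fun t => 0 < t) (fun t => rpow t (s - 1) * exp (- t)).

Definition C_Gamma (alpha : R) : R :=
  Gamma (alpha + 1) /
  (Gamma (1/2) * Gamma (alpha + 1/2) * Rpower 2 (2 * alpha - 1)).

Definition K_alpha (alpha x y z : R) : R :=
  C_Gamma alpha *
  rpow ((z^2 - (x - y)^2) * ((x + y)^2 - z^2)) (alpha - 1/2) /
  rpow (x * y * z) (2 * alpha).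

(* density of the Haar measure omega_alpha *)
Definition w_alpha (alpha z : R) : R := rpow z (2 * alpha + 1).

Definition ind01 (x : R) : R := ind (fun z => 0 <= z <= 1) x.

(* tau_y 1_[0,1] (x) = eps_x *_alpha eps_y (1_[0,1]), with eps_0 the identity *)
Definition tau_ind01 (alpha y x : R) : R :=
  if Req_EM_T y 0 then ind01 x
  else if Req_EM_T x 0 then ind01 y
  else lint_val (fun z => Rabs (x - y) < z < x + y)
         (fun z => K_alpha alpha x y z * ind01 z * w_alpha alpha z).

Definition I_n (n : nat) (x : R) : Prop := INR n - 1 <= x < INR n.

Definition omega_n (alpha : R) (n : nat) : R :=
  lint_val (I_n n) (w_alpha alpha).

Definition norm_p_inf_le (alpha p : R) (f : R -> R) (M : R) : Prop :=
  forall n : nat, (1 <= n)%nat ->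
    lint_le (I_n n) (fun x => rpow (Rabs (f x)) p * w_alpha alpha x)
            (rpow M p * omega_n alpha n).

(* Main.v *)
Require Import Defs.
From Stdlib Require Import Reals Lra Lia List ClassicalEpsilon Classical FunctionalExtensionality ZArith.
Require Import Defs.
Open Scope R_scope.

Definition ilv (u v : nat -> R) (n : nat) : R :=
  if Nat.even n then u (Nat.div2 n) else v (Nat.div2 n).

Lemma even_2k k : Nat.even (2 * k) = true.
Proof. induction k; [reflexivity|]. replace (2 * S k)%nat with (S (S (2*k))) by lia. simpl. exact IHk. Qed.
Lemma even_2k1 k : Nat.even (S (2 * k)) = false.
Proof. induction k; [reflexivity|]. replace (S (2 * S k))%nat with (S (S (S (2*k)))) by lia. simpl. exact IHk. Qed.

Lemma ilv_even u v k : ilv u v (2*k) = u k.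
Proof. unfold ilv. rewrite even_2k, Nat.div2_double. reflexivity. Qed.
Lemma ilv_odd u v k : ilv u v (S (2*k)) = v k.
Proof. unfold ilv. rewrite even_2k1, Nat.div2_succ_double. reflexivity. Qed.

Lemma sum_ilv u v N : sum_f_R0 (ilv u v) (S (2*N)) = sum_f_R0 u N + sum_f_R0 v N.
Proof.
  induction N.
  - simpl. unfold ilv. simpl. ring.
  - replace (S (2 * S N)) with (S (S (S (2*N)))) by lia.
    change (sum_f_R0 (ilv u v) (S (2 * N)) + ilv u v (S (S (2*N))) + ilv u v (S (S (S (2*N))))
      = sum_f_R0 u N + u (S N) + (sum_f_R0 v N + v (S N))).
    rewrite IHN.
    replace (S (S (2*N))) with (2 * S N)%nat by lia. rewrite ilv_even.
    replace (S (2 * S N)) with (S (2 * S N)) by lia. rewrite ilv_odd. ring.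
Qed.

Lemma sum_mono (h : nat -> R) N M : (forall n, 0 <= h n) -> (N <= M)%nat ->
  sum_f_R0 h N <= sum_f_R0 h M.
Proof.
  intros H HNM. induction HNM; [lra|]. simpl. specialize (H (S m)). lra.
Qed.

Lemma sum_ilv_le u v N : (forall n, 0 <= u n) -> (forall n, 0 <= v n) ->
  sum_f_R0 (ilv u v) N <= sum_f_R0 u N + sum_f_R0 v N.
Proof.
  intros Hu Hv.
  assert (Hh : forall n, 0 <= ilv u v n) by (intro n; unfold ilv; destruct Nat.even; auto).
  rewrite <- sum_ilv. apply sum_mono; auto. lia.
Qed.

Lemma outer_le_nonneg A r : outer_le A r -> 0 <= r.
Proof.
  intros H. destruct (Rle_lt_dec 0 r) as [|Hr]; auto.
  destruct (H (- r / 2)) as (a & b & _ & Hab & Hs); [lra|].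
  specialize (Hs 0%nat). simpl in Hs. specialize (Hab 0%nat). lra.
Qed.

Lemma outer_le_mono (A B : R -> Prop) r : (forall x, A x -> B x) -> outer_le B r -> outer_le A r.
Proof.
  intros HAB H eps He. destruct (H eps He) as (a & b & Hc & Hab & Hs).
  exists a, b. split; auto.
Qed.

Lemma outer_le_weaken A r r' : r <= r' -> outer_le A r -> outer_le A r'.
Proof.
  intros Hr H eps He. destruct (H eps He) as (a & b & Hc & Hab & Hs).
  exists a, b. repeat split; auto. intro N; specialize (Hs N); lra.
Qed.

Lemma outer_le_closed A r : (forall r', r < r' -> outer_le A r') -> outer_le A r.
Proof.
  intros H eps He. destruct (H (r + eps/2) ltac:(lra) (eps/2) ltac:(lra)) as (a & b & Hc & Hab & Hs).
  exists a, b. repeat split; auto. intro N; specialize (Hs N); lra.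
Qed.

Lemma outer_le_cover (A : R -> Prop) r (a b : nat -> R) :
  (forall x, A x -> exists n, a n < x < b n) -> (forall n, a n <= b n) ->
  (forall N, sum_f_R0 (fun n => b n - a n) N <= r) -> outer_le A r.
Proof.
  intros Hc Hab Hs eps He. exists a, b. repeat split; auto. intro N; specialize (Hs N); lra.
Qed.

Lemma outer_le_empty (A : R -> Prop) : (forall x, ~ A x) -> outer_le A 0.
Proof.
  intros H. apply (outer_le_cover A 0 (fun _ => 0) (fun _ => 0)).
  - intros x Hx; exfalso; exact (H x Hx).
  - intros; lra.
  - intro N. induction N; simpl; lra.
Qed.

Lemma outer_le_union (A B : R -> Prop) r1 r2 : outer_le A r1 -> outer_le B r2 ->
  outer_le (fun x => A x \/ B x) (r1 + r2).
Proof.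
  intros H1 H2 eps He.
  destruct (H1 (eps/2) ltac:(lra)) as (a1 & b1 & Hc1 & Hab1 & Hs1).
  destruct (H2 (eps/2) ltac:(lra)) as (a2 & b2 & Hc2 & Hab2 & Hs2).
  exists (ilv a1 a2), (ilv b1 b2). repeat split.
  - intros x [Hx|Hx].
    + destruct (Hc1 x Hx) as [n Hn]. exists (2*n)%nat. rewrite !ilv_even. auto.
    + destruct (Hc2 x Hx) as [n Hn]. exists (S (2*n)). rewrite !ilv_odd. auto.
  - intro n. unfold ilv. destruct Nat.even; auto.
  - intro N. 
    assert (E : (fun n => ilv b1 b2 n - ilv a1 a2 n) = ilv (fun n => b1 n - a1 n) (fun n => b2 n - a2 n)).
    { apply functional_extensionality_dep. intro n. unfold ilv. destruct Nat.even; auto. }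
    rewrite E. eapply Rle_trans. apply sum_ilv_le.
    + intro n; specialize (Hab1 n); lra.
    + intro n; specialize (Hab2 n); lra.
    + specialize (Hs1 N); specialize (Hs2 N); lra.
Qed.

Lemma outer_le_interval a b : a <= b -> outer_le (fun x => a <= x <= b) (b - a).
Proof.
  intros Hab eps He.
  exists (fun n => match n with O => a - eps/4 | _ => 0 end),
         (fun n => match n with O => b + eps/4 | _ => 0 end).
  repeat split.
  - intros x Hx. exists O. lra.
  - intros [|n]; lra.
  - intro N. induction N; simpl; lra.
Qed.

Definition om (A : R -> Prop) : R :=
  epsilon (inhabits 0) (fun m => outer_le A m /\ forall r, outer_le A r -> m <= r).

Lemma om_spec A : (exists r, outer_le A r) ->
  outer_le A (om A) /\ forall r, outer_le A r -> om A <= r.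
Proof.
  intros Hex. unfold om. apply epsilon_spec.
  set (E := fun y => exists r, outer_le A r /\ y = - r).
  assert (Hb : bound E).
  { exists 0. intros y [r [Hr ->]]. apply outer_le_nonneg in Hr. lra. }
  assert (Hne : exists y, E y).
  { destruct Hex as [r Hr]. exists (-r). exists r. auto. }
  destruct (completeness E Hb Hne) as [m [Hub Hlub]].
  exists (- m). split.
  - apply outer_le_closed. intros r' Hr'.
    destruct (classic (exists y, E y /\ - r' < y)) as [[y [[r [Hr ->]] Hy]]|Hn].
    + apply (outer_le_weaken A r); [lra|auto].
    + exfalso. assert (is_upper_bound E (- r')).
      { intros y Hy. destruct (Rle_lt_dec y (- r')); auto. exfalso; apply Hn; exists y; auto. }
      specialize (Hlub _ H). lra.
  - intros r Hr. assert (E (- r)) by (exists r; auto). specialize (Hub _ H). lra.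
Qed.

Definition wsum (s : list (R * (R -> Prop))) (rs : list R) : R :=
  fold_right Rplus 0 (map (fun p => fst (fst p) * snd p) (combine s rs)).

Definition Contrib (s : list (R * (R -> Prop))) (E : R -> Prop) (B : R) : Prop :=
  exists rs, Forall2 (fun cA r => fst cA = 0 \/ outer_le (fun x => snd cA x /\ E x) r) s rs
    /\ wsum s rs <= B.

Definition rsum (rs1 rs2 : list R) : list R := map (fun p => fst p + snd p) (combine rs1 rs2).

Lemma Forall2_rsum (P1 P2 P3 : (R * (R -> Prop)) -> R -> Prop) s rs1 rs2 :
  Forall2 P1 s rs1 -> Forall2 P2 s rs2 ->
  (forall a r1 r2, P1 a r1 -> P2 a r2 -> P3 a (r1 + r2)) ->
  Forall2 P3 s (rsum rs1 rs2) /\ wsum s (rsum rs1 rs2) = wsum s rs1 + wsum s rs2.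
Proof.
  intros H1. revert rs2. induction H1 as [|a r1 s rs1 Ha H1 IH]; intros rs2 H2 H.
  - inversion H2; subst. split; [constructor|]. unfold wsum, rsum; simpl; ring.
  - inversion H2 as [|a' r2 s' rs2' Ha2 H2']; subst.
    destruct (IH rs2' H2' H) as [IH1 IH2]. split.
    + unfold rsum; simpl. constructor; auto.
    + unfold wsum, rsum in *. simpl. rewrite IH2. ring.
Qed.

Lemma sval_cons c A s x : sval ((c, A) :: s) x = c * ind A x + sval s x.
Proof. reflexivity. Qed.

Lemma ind_in (A : R -> Prop) x : A x -> ind A x = 1.
Proof. intros H. unfold ind. destruct excluded_middle_informative; tauto. Qed.
Lemma ind_out (A : R -> Prop) x : ~ A x -> ind A x = 0.
Proof. intros H. unfold ind. destruct excluded_middle_informative; tauto. Qed.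
Lemma ind_01 (A : R -> Prop) x : 0 <= ind A x <= 1.
Proof. unfold ind. destruct excluded_middle_informative; lra. Qed.

Lemma sval_nonneg s x : Forall (fun cA => 0 <= fst cA) s -> 0 <= sval s x.
Proof.
  induction 1 as [|[c A] s Hc H IH]; simpl; [lra|]. simpl in Hc.
  pose proof (ind_01 A x). nra.
Qed.

Lemma sval_ge s x c A : Forall (fun cA => 0 <= fst cA) s -> In (c, A) s -> A x -> c <= sval s x.
Proof.
  induction 1 as [|[c' A'] s Hc H IH]; simpl; [tauto|]. simpl in Hc. intros [E|Hin] HA.
  - inversion E; subst. rewrite ind_in; auto. pose proof (sval_nonneg s x H). lra.
  - pose proof (ind_01 A' x). specialize (IH Hin HA). nra.
Qed.

Lemma sval_zero s x : (forall c A, In (c, A) s -> ~ A x) -> sval s x = 0.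
Proof.
  induction s as [|[c A] s IH]; simpl; intros H; [lra|].
  rewrite ind_out by (apply (H c); auto). rewrite IH; [ring|]. intros; eapply H; eauto.
Qed.


Lemma contrib_piece s : Forall (fun cA => 0 <= fst cA /\ lmeasurable (snd cA)) s ->
  forall E rE b, 0 <= b -> outer_le E rE -> (forall x, E x -> sval s x <= b) ->
  Contrib s E (b * rE).
Proof.
  induction 1 as [|[c A] s [Hc HA] Hs IH]; intros E rE b Hb HE Hsv.
  - exists nil. split; [constructor|]. unfold wsum; simpl.
    pose proof (outer_le_nonneg _ _ HE). nra.
  - simpl in Hc, HA.
    assert (Hs0 : Forall (fun cA => 0 <= fst cA) s) by (eapply Forall_impl; [|exact Hs]; intros a [? ?]; auto).
    destruct (Rlt_le_dec b c) as [Hbc|Hcb].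
    + assert (HnA : forall x, E x -> ~ A x).
      { intros x Ex Ax. specialize (Hsv x Ex). rewrite sval_cons, ind_in in Hsv by auto.
        pose proof (sval_nonneg s x Hs0). lra. }
      destruct (IH E rE b Hb HE) as [rs [H1 H2]].
      { intros x Ex. specialize (Hsv x Ex). rewrite sval_cons, ind_out in Hsv by auto. lra. }
      exists (0 :: rs). split.
      * constructor; auto. right. apply outer_le_empty. intros x [Ax Ex]. exact (HnA x Ex Ax).
      * unfold wsum in *. simpl. lra.
    + destruct (HA E rE HE) as (r1 & r2 & Hr1 & Hr2 & Hr12).
      destruct (IH (fun x => E x /\ A x) r1 (b - c) ltac:(lra) Hr1) as [rs1 [H11 H12]].
      { intros x [Ex Ax]. specialize (Hsv x Ex). rewrite sval_cons, ind_in in Hsv by auto. lra. }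
      destruct (IH (fun x => E x /\ ~ A x) r2 b Hb Hr2) as [rs2 [H21 H22]].
      { intros x [Ex Ax]. specialize (Hsv x Ex). rewrite sval_cons, ind_out in Hsv by auto. lra. }
      destruct (Forall2_rsum _ _ (fun cA r => fst cA = 0 \/ outer_le (fun x => snd cA x /\ E x) r)
                  s rs1 rs2 H11 H21) as [F1 F2].
      { intros a q1 q2 [Z|O1] [Z'|O2]; auto. right.
        eapply outer_le_mono; [|apply (outer_le_union _ _ _ _ O1 O2)].
        intros x [Ax Ex]. destruct (classic (A x)); [left|right]; tauto. }
      exists (r1 :: rsum rs1 rs2). split.
      * constructor; auto. right. eapply outer_le_mono; [|exact Hr1]. simpl; tauto.
      * unfold wsum in *. simpl. rewrite F2.
        pose proof (outer_le_nonneg _ _ Hr1). pose proof (outer_le_nonneg _ _ Hr2).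
        assert (b * (r1 + r2) <= b * rE) by (apply Rmult_le_compat_l; lra). simpl. nra.
Qed.

Lemma contrib_union s E1 E2 B1 B2 : Contrib s E1 B1 -> Contrib s E2 B2 ->
  Contrib s (fun x => E1 x \/ E2 x) (B1 + B2).
Proof.
  intros [rs1 [H11 H12]] [rs2 [H21 H22]].
  destruct (Forall2_rsum _ _ (fun cA r => fst cA = 0 \/ outer_le (fun x => snd cA x /\ (E1 x \/ E2 x)) r)
              s rs1 rs2 H11 H21) as [F1 F2].
  { intros a q1 q2 [Z|O1] [Z'|O2]; auto. right.
    eapply outer_le_mono; [|apply (outer_le_union _ _ _ _ O1 O2)]. tauto. }
  exists (rsum rs1 rs2). split; auto. lra.
Qed.

Lemma contrib_mono s (E E' : R -> Prop) B B' : (forall x, E' x -> E x) -> B <= B' ->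
  Contrib s E B -> Contrib s E' B'.
Proof.
  intros HE HB [rs [H1 H2]]. exists rs. split; [|lra].
  eapply Forall2_impl; [|exact H1]. intros a r [Z|O]; auto. right.
  eapply outer_le_mono; [|exact O]. intros x [? ?]; auto.
Qed.

Lemma contrib_empty s : Contrib s (fun _ => False) 0.
Proof.
  exists (map (fun _ => 0) s). split.
  - induction s; simpl; constructor; auto. right. apply outer_le_empty. tauto.
  - unfold wsum. induction s; simpl; [lra|]. unfold wsum in IHs. lra.
Qed.

Fixpoint fsum (B : nat -> R) (K : nat) : R :=
  match K with O => 0 | S K => fsum B K + B K end.

Lemma contrib_family s (E : nat -> R -> Prop) (B : nat -> R) K :
  (forall k, (k < K)%nat -> Contrib s (E k) (B k)) ->
  Contrib s (fun x => exists k, (k < K)%nat /\ E k x) (fsum B K).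
Proof.
  induction K; intros H.
  - eapply contrib_mono; [|apply Rle_refl|apply contrib_empty]. intros x [k [Hk _]]; lia.
  - simpl. eapply contrib_mono; [|apply Rle_refl|apply contrib_union; [apply IHK|apply (H K)]].
    + intros x [k [Hk Ex]]. destruct (Nat.eq_dec k K); [subst; right; auto|left; exists k; split; auto; lia].
    + intros; apply H; lia.
    + lia.
Qed.

Lemma contrib_final s E B : Contrib s E B ->
  Forall (fun cA => fst cA <> 0 -> forall x, snd cA x -> E x) s ->
  exists rs, Forall2 (fun cA r => fst cA = 0 \/ outer_le (snd cA) r) s rs /\ wsum s rs <= B.
Proof.
  intros [rs [H1 H2]] HF. exists rs. split; auto. clear H2.
  revert HF. induction H1 as [|a r s' rs' Ha H1 IH]; intros HF; constructor; inversion HF as [|a' s'' Hx HF']; subst; auto.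
  destruct (Req_dec (fst a) 0) as [Z|NZ]; [left; auto|].
  destruct Ha as [Z|O]; auto. right. eapply outer_le_mono; [|exact O].
  intros y Hy. split; auto.
Qed.

Definition validD (D : R -> Prop) (s : list (R * (R -> Prop))) : Prop :=
  Forall (fun cA => 0 <= fst cA /\ lmeasurable (snd cA) /\ (forall x, snd cA x -> D x)) s.

Lemma validD_nonneg D s : validD D s -> Forall (fun cA => 0 <= fst cA) s.
Proof. intro H; eapply Forall_impl; [|exact H]; simpl; tauto. Qed.
Lemma validD_meas D s : validD D s -> Forall (fun cA => 0 <= fst cA /\ lmeasurable (snd cA)) s.
Proof. intro H; eapply Forall_impl; [|exact H]; simpl; tauto. Qed.

Lemma lint_le_nonneg D g K : (forall x, D x -> 0 <= g x) -> lint_le D g K -> 0 <= K.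
Proof.
  intros Hg H. destruct (H nil) as [rs [H1 H2]].
  - constructor.
  - intros x Dx. simpl. apply Hg; auto.
  - inversion H1; subst. simpl in H2. lra.
Qed.

Lemma lint_le_weaken D g K K' : K <= K' -> lint_le D g K -> lint_le D g K'.
Proof.
  intros HK H s Hs Hsv. destruct (H s Hs Hsv) as [rs [H1 H2]]. exists rs. split; auto. lra.
Qed.

Lemma wsum_om s rs : Forall (fun cA => 0 <= fst cA) s ->
  Forall2 (fun cA r => fst cA = 0 \/ outer_le (snd cA) r) s rs ->
  Forall2 (fun cA r => fst cA = 0 \/ outer_le (snd cA) r) s (map (fun cA => om (snd cA)) s)
  /\ wsum s (map (fun cA => om (snd cA)) s) <= wsum s rs.
Proof.
  intros Hc H. induction H as [|a r s rs Ha H IH]; [split; [constructor|unfold wsum; simpl; lra]|].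
  inversion Hc as [|a' s' Ha0 Hc']; subst. destruct (IH Hc') as [IH1 IH2].
  split.
  - simpl. constructor; auto. destruct Ha as [Z|O]; auto. right. apply om_spec. eauto.
  - unfold wsum in *. simpl. destruct Ha as [Z|O].
    + rewrite Z. lra.
    + assert (om (snd a) <= r) by (apply om_spec; eauto). 
      assert (fst a * om (snd a) <= fst a * r) by (apply Rmult_le_compat_l; auto). lra.
Qed.

Lemma lint_le_closed D g K : (forall K', K < K' -> lint_le D g K') -> lint_le D g K.
Proof.
  intros H s Hs Hsv.
  assert (Hc : Forall (fun cA => 0 <= fst cA) s) by (eapply Forall_impl; [|exact Hs]; simpl; tauto).
  destruct (H (K+1) ltac:(lra) s Hs Hsv) as [rs0 [H01 H02]].
  destruct (wsum_om s rs0 Hc H01) as [F1 _].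
  exists (map (fun cA => om (snd cA)) s). split; auto.
  destruct (Rle_lt_dec (wsum s (map (fun cA => om (snd cA)) s)) K) as [|Hlt]; auto.
  exfalso. set (w := wsum s (map (fun cA => om (snd cA)) s)) in *.
  destruct (H ((w + K)/2) ltac:(lra) s Hs Hsv) as [rs1 [H11 H12]].
  destruct (wsum_om s rs1 Hc H11) as [_ F2]. fold w in F2. unfold wsum in F2. lra.
Qed.

Lemma lint_exists D g B : (forall x, D x -> 0 <= g x) -> lint_le D g B ->
  lint_eq D g (lint_val D g).
Proof.
  intros Hg HB. unfold lint_val. apply epsilon_spec.
  set (E := fun y => exists K, lint_le D g K /\ y = - K).
  assert (Hb : bound E).
  { exists 0. intros y [K [HK ->]]. apply lint_le_nonneg in HK; auto. lra. }
  assert (Hne : exists y, E y) by (exists (-B); exists B; auto).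
  destruct (completeness E Hb Hne) as [m [Hub Hlub]].
  exists (- m). split.
  - apply lint_le_closed. intros K' HK'.
    destruct (classic (exists y, E y /\ - K' < y)) as [[y [[K [HK ->]] Hy]]|Hn].
    + apply (lint_le_weaken D g K); [lra|auto].
    + exfalso. assert (is_upper_bound E (- K')).
      { intros y Hy. destruct (Rle_lt_dec y (- K')); auto. exfalso; apply Hn; exists y; auto. }
      specialize (Hlub _ H). lra.
  - intros K HK. assert (E (- K)) by (exists K; auto). specialize (Hub _ H). lra.
Qed.

Lemma lint_val_bounds D g B : (forall x, D x -> 0 <= g x) -> lint_le D g B ->
  0 <= lint_val D g <= B.
Proof.
  intros Hg HB. destruct (lint_exists D g B Hg HB) as [H1 H2]. split.
  - eapply lint_le_nonneg; eauto.
  - apply H2; auto.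
Qed.

Lemma lint_of_contrib D g B :
  (forall s, validD D s -> (forall x, D x -> sval s x <= g x) ->
     exists E, (forall x, D x -> 0 < sval s x -> E x) /\ Contrib s E B) -> lint_le D g B.
Proof.
  intros H s Hs Hsv. destruct (H s Hs Hsv) as [E [HE HC]].
  destruct (contrib_final s E B HC) as [rs [H1 H2]].
  - assert (Hc := validD_nonneg D s Hs).
    apply Forall_forall. intros [c A] Hin Hc0 x Ax. simpl in *.
    unfold validD in Hs; rewrite Forall_forall in Hs. destruct (Hs _ Hin) as (Hc1 & _ & HD). simpl in *.
    apply HE; auto. pose proof (sval_ge s x c A Hc Hin Ax). lra.
  - exists rs. split; auto.
Qed.

Lemma sval_outside D s x : validD D s -> ~ D x -> sval s x = 0.
Proof.
  intros Hs Dx. apply sval_zero. intros c A Hin Ax. unfold validD in Hs; rewrite Forall_forall in Hs.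
  destruct (Hs _ Hin) as (_ & _ & HD). apply Dx, HD, Ax.
Qed.

Lemma lint_piece D g E rE b : 0 <= b -> outer_le E rE ->
  (forall x, D x -> 0 < g x -> E x) -> (forall x, D x -> E x -> g x <= b) ->
  lint_le D g (b * rE).
Proof.
  intros Hb HE H1 H2. apply lint_of_contrib. intros s Hs Hsv. exists E. split.
  { intros x Dx Hp. apply H1; auto. specialize (Hsv x Dx). lra. }
  apply contrib_piece; auto. apply (validD_meas D); auto.
  intros x Ex. destruct (classic (D x)) as [Dx|Dx].
  - specialize (Hsv x Dx). specialize (H2 x Dx Ex). lra.
  - rewrite (sval_outside D s x Hs Dx). lra.
Qed.

Lemma lmeasurable_inter (A B : R -> Prop) : lmeasurable A -> lmeasurable B ->
  lmeasurable (fun x => A x /\ B x).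
Proof.
  intros HA HB E r HE.
  destruct (HA E r HE) as (r1 & r2 & H1 & H2 & H12).
  destruct (HB _ r1 H1) as (r11 & r12 & H11 & H12' & H112).
  exists r11, (r12 + r2). split; [|split].
  - eapply outer_le_mono; [|exact H11]. simpl. tauto.
  - eapply outer_le_mono; [|apply (outer_le_union _ _ _ _ H12' H2)].
    intros x [Ex Hx]. destruct (classic (A x)); [left|right]; tauto.
  - lra.
Qed.

Lemma sum_geom eps N : sum_f_R0 (fun n => eps * (/2)^(S n)) N = eps * (1 - (/2)^(S N)).
Proof. induction N; simpl in *; [field|]. rewrite IHN. field. Qed.

Lemma pow_half_pos n : 0 < (/2)^n.
Proof. apply pow_lt. lra. Qed.

Lemma split_len an bn a b d : a <= b -> an <= bn -> 0 < d ->
  (Rmax (Rmax an (a - d)) (Rmin bn b) - Rmax an (a - d)) +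
  (Rmax an (Rmin bn a) - an) + (bn - Rmin bn (Rmax an (b - d))) <= bn - an + 2 * d.
Proof.
  intros. unfold Rmax, Rmin.
  repeat match goal with |- context [Rle_dec ?x ?y] => destruct (Rle_dec x y) end; lra.
Qed.

Lemma lmeasurable_Ico a b : lmeasurable (fun x => a <= x < b).
Proof.
  destruct (Rle_lt_dec a b) as [Hab|Hab].
  2:{ intros E r HE. exists 0, r. split; [|split].
      - apply outer_le_empty. intros x [_ Hx]; lra.
      - eapply outer_le_mono; [|exact HE]. tauto.
      - lra. }
  intros E r HE.
  set (I := fun x => a <= x < b).
  assert (Ex1 : exists q, outer_le (fun x => E x /\ I x) q) by (exists r; eapply outer_le_mono; [|exact HE]; tauto).
  assert (Ex2 : exists q, outer_le (fun x => E x /\ ~ I x) q) by (exists r; eapply outer_le_mono; [|exact HE]; tauto).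
  destruct (om_spec _ Ex1) as [O1 M1]. destruct (om_spec _ Ex2) as [O2 M2].
  exists (om (fun x => E x /\ I x)), (om (fun x => E x /\ ~ I x)). split; [|split]; auto.
  set (o1 := om (fun x => E x /\ I x)) in *. set (o2 := om (fun x => E x /\ ~ I x)) in *.
  assert (Key : forall eps, 0 < eps -> o1 + o2 <= r + 3 * eps).
  2:{ destruct (Rle_lt_dec (o1 + o2) r) as [|Hlt]; auto.
      specialize (Key ((o1 + o2 - r)/6) ltac:(lra)). lra. }
  intros eps He.
  destruct (HE eps He) as (an & bn & Hc & Hab' & Hs).
  set (d := fun n : nat => eps * (/2)^(S n)).
  assert (Hd : forall n, 0 < d n) by (intro n; unfold d; pose proof (pow_half_pos (S n)); nra).
  assert (Hsd : forall N, sum_f_R0 d N <= eps).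
  { intro N. unfold d. rewrite sum_geom. pose proof (pow_half_pos (S N)). nra. }
  set (a1 := fun n => Rmax (an n) (a - d n)).
  set (b1 := fun n => Rmax (a1 n) (Rmin (bn n) b)).
  set (b2 := fun n => Rmax (an n) (Rmin (bn n) a)).
  set (a3 := fun n => Rmin (bn n) (Rmax (an n) (b - d n))).
  set (l1 := fun n => b1 n - a1 n). set (l2 := fun n => b2 n - an n). set (l3 := fun n => bn n - a3 n).
  assert (Hl1 : forall n, 0 <= l1 n) by (intro n; unfold l1, b1; pose proof (Rmax_l (a1 n) (Rmin (bn n) b)); lra).
  assert (Hl2 : forall n, 0 <= l2 n) by (intro n; unfold l2, b2; pose proof (Rmax_l (an n) (Rmin (bn n) a)); lra).
  assert (Hl3 : forall n, 0 <= l3 n) by (intro n; unfold l3, a3; pose proof (Rmin_l (bn n) (Rmax (an n) (b - d n))); lra).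
  assert (Hl : forall n, l1 n + l2 n + l3 n <= bn n - an n + 2 * d n).
  { intro n. unfold l1, l2, l3, a1, b1, b2, a3. apply split_len; auto. }
  set (T := r + 3 * eps).
  assert (HT : forall N, sum_f_R0 l1 N + sum_f_R0 l2 N + sum_f_R0 l3 N <= T).
  { intro N.
    assert (Ha : sum_f_R0 (fun n => l1 n + l2 n + l3 n) N = sum_f_R0 l1 N + sum_f_R0 l2 N + sum_f_R0 l3 N)
      by (clear; induction N; simpl; [ring|rewrite IHN; ring]).
    assert (Hb : sum_f_R0 (fun n => (bn n - an n) + 2 * d n) N = sum_f_R0 (fun n => bn n - an n) N + 2 * sum_f_R0 d N)
      by (clear; induction N; simpl; [ring|rewrite IHN; ring]).
    assert (sum_f_R0 (fun n => l1 n + l2 n + l3 n) N <= sum_f_R0 (fun n => (bn n - an n) + 2 * d n) N)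
      by (apply sum_growing; auto).
    specialize (Hs N). specialize (Hsd N). unfold T. lra. }
  set (S1 := fun y => exists N, y = sum_f_R0 l1 N).
  assert (Hb1 : bound S1).
  { exists T. intros y [N ->]. specialize (HT N). pose proof (cond_pos_sum l2 N Hl2). pose proof (cond_pos_sum l3 N Hl3). lra. }
  destruct (completeness S1 Hb1 (ex_intro _ _ (ex_intro _ O eq_refl))) as [L1 [Hub Hlub]].
  assert (OL1 : outer_le (fun x => E x /\ I x) L1).
  { apply (outer_le_cover _ L1 a1 b1).
    - intros x [Ex [Hxa Hxb]]. destruct (Hc x Ex) as [n Hn]. exists n. unfold b1, a1.
      pose proof (Rmax_l (Rmax (an n) (a - d n)) (Rmin (bn n) b)).
      specialize (Hd n).
      unfold Rmax, Rmin in *. repeat match goal with |- context [Rle_dec ?x ?y] => destruct (Rle_dec x y) end;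
      repeat match goal with H : context [Rle_dec ?x ?y] |- _ => destruct (Rle_dec x y) end; lra.
    - intro n. unfold b1. apply Rmax_l.
    - intro N. apply Hub. exists N. reflexivity. }
  assert (OL2 : outer_le (fun x => E x /\ ~ I x) (T - L1)).
  { apply (outer_le_cover _ (T - L1) (ilv an a3) (ilv b2 bn)).
    - intros x [Ex Hx]. destruct (Hc x Ex) as [n Hn]. unfold I in Hx.
      destruct (Rlt_le_dec x a).
      + exists (2 * n)%nat. rewrite !ilv_even. unfold b2. 
        unfold Rmax, Rmin. repeat match goal with |- context [Rle_dec ?x ?y] => destruct (Rle_dec x y) end;
      repeat match goal with H : context [Rle_dec ?x ?y] |- _ => destruct (Rle_dec x y) end; lra.
      + assert (b <= x) by (destruct (Rlt_le_dec x b); auto; exfalso; apply Hx; lra).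
        exists (S (2 * n)). rewrite !ilv_odd. unfold a3. specialize (Hd n).
        unfold Rmax, Rmin. repeat match goal with |- context [Rle_dec ?x ?y] => destruct (Rle_dec x y) end;
      repeat match goal with H : context [Rle_dec ?x ?y] |- _ => destruct (Rle_dec x y) end; lra.
    - intro n. unfold ilv. destruct Nat.even.
      + unfold b2. apply Rmax_l.
      + unfold a3. apply Rmin_l.
    - intro N.
      assert (E2 : forall n, ilv b2 bn n - ilv an a3 n = ilv l2 l3 n)
        by (intro n; unfold ilv, l2, l3; destruct Nat.even; reflexivity).
      rewrite (sum_eq _ _ N (fun i _ => E2 i)).
      eapply Rle_trans; [apply sum_ilv_le; auto|].
      assert (L1 <= T - sum_f_R0 l2 N - sum_f_R0 l3 N); [|lra].
      apply Hlub. intros y [M ->].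
      set (K := Nat.max M N).
      assert (sum_f_R0 l1 M <= sum_f_R0 l1 K) by (apply sum_mono; auto; lia).
      assert (sum_f_R0 l2 N <= sum_f_R0 l2 K) by (apply sum_mono; auto; lia).
      assert (sum_f_R0 l3 N <= sum_f_R0 l3 K) by (apply sum_mono; auto; lia).
      specialize (HT K). lra. }
  specialize (M1 _ OL1). specialize (M2 _ OL2). unfold T in *. lra.
Qed.

Lemma nat_above r : exists n : nat, r < INR n.
Proof.
  destruct (archimed r) as [H1 _].
  destruct (Z_le_gt_dec (up r) 0) as [Hz|Hz].
  - exists O. simpl. apply IZR_le in Hz. lra.
  - exists (Z.to_nat (up r)). rewrite INR_IZR_INZ, Z2Nat.id by lia. lra.
Qed.

Lemma Rpower_pos x a : 0 < Rpower x a.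
Proof. unfold Rpower. apply exp_pos. Qed.

Lemma rpow_pos_eq x a : 0 < x -> rpow x a = Rpower x a.
Proof. intros. unfold rpow. destruct (Rle_dec x 0); [lra|reflexivity]. Qed.

Lemma rpow_nonneg x a : 0 <= rpow x a.
Proof. unfold rpow. destruct (Rle_dec x 0); [lra|]. left; apply Rpower_pos. Qed.

Lemma Rpower_le_base_small t a b : 0 < t <= 1 -> a <= b -> Rpower t b <= Rpower t a.
Proof.
  intros Ht Hab. unfold Rpower.
  assert (ln t <= 0). { rewrite <- ln_1. destruct (Req_dec t 1) as [E|E]; [rewrite E; lra|]. left; apply ln_increasing; lra. }
  destruct (Req_dec (b * ln t) (a * ln t)) as [E|E]; [rewrite E; lra|].
  left. apply exp_increasing. nra.
Qed.

Lemma exp_nat_mul (n : nat) u : exp (INR n * u) = exp u ^ n.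
Proof.
  rewrite <- Rpower_pow by apply exp_pos. unfold Rpower. rewrite ln_exp. reflexivity.
Qed.

Lemma pow_le_exp (n : nat) t : (1 <= n)%nat -> 0 <= t -> t ^ n <= INR n ^ n * exp t.
Proof.
  intros Hn Ht.
  assert (HnR : 0 < INR n) by (apply lt_0_INR; lia).
  replace t with (INR n * (t / INR n)) at 2 by (field; lra).
  rewrite exp_nat_mul.
  replace (t ^ n) with (INR n ^ n * (t / INR n) ^ n) by (rewrite <- Rpow_mult_distr; f_equal; field; lra).
  apply Rmult_le_compat_l; [apply pow_le; lra|].
  apply pow_incr. split.
  - unfold Rdiv; apply Rmult_le_pos; [lra|left; apply Rinv_0_lt_compat; lra].
  - pose proof (exp_ineq1_le (t / INR n)). lra.
Qed.

Lemma pow_ge_INR (k : nat) : INR k <= 2 ^ k.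
Proof.
  induction k; [simpl; lra|]. rewrite S_INR. simpl.
  assert (1 <= 2 ^ k) by (apply pow_R1_Rle; lra). lra.
Qed.

Lemma pow4_ge_INR (k : nat) : INR k <= 4 ^ k.
Proof.
  induction k; [simpl; lra|]. rewrite S_INR. simpl.
  assert (1 <= 4 ^ k) by (apply pow_R1_Rle; lra). lra.
Qed.

Definition gam (s t : R) : R := rpow t (s - 1) * exp (- t).

Lemma gam_nonneg s t : 0 <= gam s t.
Proof. unfold gam. pose proof (rpow_nonneg t (s-1)). pose proof (exp_pos (- t)). nra. Qed.

Lemma gam_small s t (j : nat) : 1/2 <= s -> 0 < t <= 1 -> (/4) ^ (S j) <= t -> gam s t <= 2 ^ (S j).
Proof.
  intros Hs Ht Hj. unfold gam. rewrite rpow_pos_eq by lra.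
  assert (E1 : exp (- t) <= 1) by (rewrite <- exp_0; destruct (Req_dec t 0); [lra|left; apply exp_increasing; lra]).
  assert (E2 : Rpower t (s - 1) <= Rpower t (- (1/2))) by (apply Rpower_le_base_small; lra).
  assert (E3 : Rpower t (- (1/2)) <= 2 ^ (S j)).
  { unfold Rpower. rewrite <- (exp_ln (2 ^ S j)) by (apply pow_lt; lra).
    assert (ln ((/4) ^ S j) <= ln t).
    { destruct (Req_dec ((/4)^S j) t) as [E|E]; [rewrite E; lra|]. left. apply ln_increasing; [apply pow_lt; lra|lra]. }
    rewrite ln_pow in H by lra. rewrite ln_Rinv in H by lra. rewrite ln_pow by lra.
    replace 4 with (2 * 2) in H by lra. rewrite ln_mult in H by lra.
    destruct (Req_dec (- (1/2) * ln t) (INR (S j) * ln 2)) as [E|E]; [rewrite E; lra|].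
    left. apply exp_increasing. lra. }
  pose proof (Rpower_pos t (s-1)). pose proof (exp_pos (-t)). nra.
Qed.

Lemma gam_large s t (N0 : nat) : (1 <= N0)%nat -> s + 1 <= INR N0 -> 1 <= t ->
  gam s t * t ^ 2 <= INR N0 ^ N0.
Proof.
  intros HN Hs Ht. unfold gam. rewrite rpow_pos_eq by lra.
  assert (E1 : Rpower t (s - 1) * t ^ 2 = Rpower t (s + 1)).
  { replace (s + 1) with ((s - 1) + INR 2) by (simpl; lra). rewrite Rpower_plus, Rpower_pow by lra. reflexivity. }
  assert (E2 : Rpower t (s + 1) <= t ^ N0).
  { rewrite <- Rpower_pow by lra. apply Rle_Rpower; lra. }
  assert (E3 : t ^ N0 * exp (- t) <= INR N0 ^ N0).
  { pose proof (pow_le_exp N0 t HN ltac:(lra)). rewrite exp_Ropp.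
    pose proof (exp_pos t).
    apply (Rmult_le_reg_r (exp t)); auto. rewrite Rmult_assoc, Rinv_l by lra. lra. }
  pose proof (exp_pos (-t)).
  replace (Rpower t (s - 1) * exp (- t) * t ^ 2) with (Rpower t (s - 1) * t ^ 2 * exp (- t)) by ring.
  rewrite E1. nra.
Qed.

Definition csum (l : list (R * (R -> Prop))) : R := fold_right (fun cA acc => fst cA + acc) 0 l.
Definition isum (K : R) (l : list (R * (R -> Prop))) : R := fold_right (fun cA acc => K / fst cA + acc) 0 l.

Lemma sval_le_csum l x : Forall (fun cA => 0 <= fst cA) l -> sval l x <= csum l.
Proof.
  induction 1 as [|[c A] l Hc H IH]; simpl; [lra|]. simpl in Hc. pose proof (ind_01 A x). nra.
Qed.

Lemma div_nonneg K c : 0 <= K -> 0 <= c -> 0 <= K / c.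
Proof.
  intros. unfold Rdiv. destruct (Req_dec c 0) as [->|]; [rewrite Rinv_0; lra|].
  apply Rmult_le_pos; auto. left; apply Rinv_0_lt_compat; lra.
Qed.

Lemma isum_ge K l c A : 0 <= K -> Forall (fun cA => 0 <= fst cA) l -> In (c, A) l -> K / c <= isum K l.
Proof.
  intros HK. induction 1 as [|[c' A'] l Hc H IH]; simpl; [tauto|]. simpl in Hc.
  assert (Hnn : 0 <= isum K l).
  { clear IH. induction H as [|[c2 A2] l H2 H IH2]; simpl; [lra|]. simpl in H2. pose proof (div_nonneg K c2 HK H2). lra. }
  intros [E|Hin].
  - inversion E; subst. lra.
  - specialize (IH Hin). pose proof (div_nonneg K c' HK Hc). lra.
Qed.

Lemma sval_pos_ex l x : 0 < sval l x -> exists c A, In (c, A) l /\ A x /\ 0 < c.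
Proof.
  induction l as [|[c A] l IH]; simpl; intros H; [lra|].
  destruct (classic (A x /\ 0 < c)) as [[Ax Hc]|Hn].
  - exists c, A. auto.
  - assert (c * ind A x <= 0).
    { destruct (classic (A x)) as [Ax|Ax].
      + rewrite ind_in by auto. assert (c <= 0) by (destruct (Rle_lt_dec c 0); auto; exfalso; tauto). lra.
      + rewrite ind_out by auto. lra. }
    destruct IH as (c' & A' & H1 & H2 & H3); [lra|]. exists c', A'. auto.
Qed.

Lemma pow_quarter_le1 k : (/4) ^ k <= 1.
Proof. induction k; simpl; [lra|]. pose proof (pow_lt (/4) k ltac:(lra)). lra. Qed.

Lemma low_cover J x : 0 < x <= 1 -> x <= (/4) ^ J \/ exists j, (j < J)%nat /\ (/4) ^ (S j) <= x <= (/4) ^ j.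
Proof.
  intros Hx. induction J as [|J IH].
  - left. simpl. lra.
  - destruct IH as [H|[j [Hj H]]].
    + destruct (Rle_lt_dec x ((/4) ^ S J)) as [H'|H']; [left; auto|right; exists J; split; [lia|lra]].
    + right. exists j. split; [lia|auto].
Qed.

Lemma high_cover N x : 1 <= x <= 2 ^ N -> x <= 1 \/ exists j, (j < N)%nat /\ 2 ^ j <= x <= 2 ^ (S j).
Proof.
  intros Hx. induction N as [|N IH].
  - left. simpl in Hx. lra.
  - destruct (Rle_lt_dec x (2 ^ N)) as [H|H].
    + destruct (IH ltac:(lra)) as [H1|[j [Hj H1]]]; [left; auto|right; exists j; split; [lia|auto]].
    + right. exists N. split; [lia|lra].
Qed.

Lemma fsum_mid J : fsum (fun k => 2 ^ S k * ((/4) ^ k - (/4) ^ S k)) J <= 3.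
Proof.
  assert (E : forall k, 2 ^ S k * ((/4) ^ k - (/4) ^ S k) = 3/2 * (/2) ^ k).
  { induction k; [simpl; field|].
    replace (2 ^ S (S k) * ((/4) ^ S k - (/4) ^ S (S k))) with (/2 * (2 ^ S k * ((/4) ^ k - (/4) ^ S k))) by (simpl; field).
    rewrite IHk. simpl. field. }
  assert (F : forall K, fsum (fun k => 2 ^ S k * ((/4) ^ k - (/4) ^ S k)) K = 3 * (1 - (/2) ^ K)).
  { induction K; cbn [fsum]; [ring|]. rewrite IHK, E. cbn [pow]. field. }
  rewrite F. pose proof (pow_lt (/2) J ltac:(lra)). lra.
Qed.

Lemma fsum_tail Kc N : 0 <= Kc -> fsum (fun k => Kc / 4 ^ k * (2 ^ S k - 2 ^ k)) N <= 2 * Kc.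
Proof.
  intros HK.
  assert (E : forall k, Kc / 4 ^ k * (2 ^ S k - 2 ^ k) = Kc * (/2) ^ k).
  { intro k. assert (0 < 2 ^ k) by (apply pow_lt; lra).
    replace (4 ^ k) with (2 ^ k * 2 ^ k) by (rewrite <- Rpow_mult_distr; f_equal; lra).
    rewrite pow_inv. simpl. field. lra. }
  assert (F : forall K, fsum (fun k => Kc / 4 ^ k * (2 ^ S k - 2 ^ k)) K = 2 * Kc * (1 - (/2) ^ K)).
  { induction K; cbn [fsum]; [ring|]. rewrite IHK, E. cbn [pow]. field. }
  rewrite F. pose proof (pow_lt (/2) N ltac:(lra)). nra.
Qed.

Lemma gamma_bound s : 1/2 <= s -> exists B, lint_le (fun t => 0 < t) (gam s) B.
Proof.
  intros Hs.
  destruct (nat_above (s + 1)) as [N0 HN0].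
  assert (HN1 : (1 <= N0)%nat) by (destruct N0; [simpl in HN0; lra|lia]).
  set (Kc := INR N0 ^ N0).
  assert (HKc : 0 <= Kc) by (apply pow_le; apply pos_INR).
  exists (1 + 3 + 2 * Kc).
  apply lint_of_contrib. intros l Hl Hsv.
  assert (Hl0 := validD_nonneg _ _ Hl). assert (Hlm := validD_meas _ _ Hl).
  destruct (nat_above (csum l)) as [J HJ].
  destruct (nat_above (isum Kc l)) as [N HN].
  set (E1 := fun x => 0 < x <= (/4) ^ J).
  set (E2 := fun x => exists k, (k < J)%nat /\ (/4) ^ (S k) <= x <= (/4) ^ k).
  set (E3 := fun x => exists k, (k < N)%nat /\ 2 ^ k <= x <= 2 ^ (S k)).
  assert (Hsv0 : forall x, ~ 0 < x -> sval l x = 0) by (intros; eapply sval_outside; eauto).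
  exists (fun x => E1 x \/ (E2 x \/ E3 x)). split.
  - intros x Dx Hp. destruct (Rle_lt_dec x 1) as [Hx1|Hx1].
    + destruct (low_cover J x ltac:(lra)) as [H|H]; [left; split; auto|right; left; exact H].
    + destruct (sval_pos_ex l x Hp) as (c & A & Hin & Ax & Hc).
      assert (c <= gam s x). { pose proof (sval_ge l x c A Hl0 Hin Ax). specialize (Hsv x Dx). lra. }
      pose proof (gam_large s x N0 HN1 ltac:(lra) ltac:(lra)).
      pose proof (isum_ge Kc l c A HKc Hl0 Hin).
      assert (x ^ 2 <= Kc / c).
      { apply (Rmult_le_reg_l c); auto. unfold Rdiv. rewrite <- Rmult_assoc, (Rmult_comm c Kc), Rmult_assoc, Rinv_r by lra.
        fold Kc in H0. pose proof (pow_lt x 2 ltac:(lra)). nra. }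
      pose proof (pow_ge_INR N).
      assert (x <= 2 ^ N) by (simpl in H2; nra).
      destruct (high_cover N x ltac:(lra)) as [H'|H']; [lra|right; right; exact H'].
  - replace (1 + 3 + 2 * Kc) with (1 + (3 + 2 * Kc)) by ring.
    apply contrib_union; [|apply contrib_union].
    +
      assert (HJ4 : csum l * (/4) ^ J <= 1).
      { pose proof (pow4_ge_INR J). pose proof (pow_lt (/4) J ltac:(lra)).
        assert (4 ^ J * (/4) ^ J = 1) by (rewrite <- Rpow_mult_distr; replace (4 * /4) with 1 by field; apply pow1).
        nra. }
      eapply contrib_mono; [intros x Hx; exact Hx| |].
      2:{ apply (contrib_piece l Hlm E1 ((/4) ^ J - 0) (csum l)).
          - eapply Rle_trans; [apply (sval_nonneg l 0 Hl0)|apply sval_le_csum; auto].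
          - eapply outer_le_mono; [|apply outer_le_interval; left; apply pow_lt; lra]. unfold E1; intros x Hx; lra.
          - intros x _. apply sval_le_csum; auto. }
      lra.
    + eapply contrib_mono; [intros x Hx; exact Hx| |apply (contrib_family l _ (fun k => 2 ^ S k * ((/4) ^ k - (/4) ^ S k)) J)].
      * apply fsum_mid.
      * intros k Hk. apply contrib_piece; auto.
        -- left; apply pow_lt; lra.
        -- apply outer_le_interval. assert ((/4) ^ S k <= (/4) ^ k) by (simpl; pose proof (pow_lt (/4) k ltac:(lra)); nra). lra.
        -- intros x Hx. destruct (Rle_lt_dec x 0) as [Hx0|Hx0].
           ++ rewrite Hsv0 by lra. left; apply pow_lt; lra.
           ++ eapply Rle_trans; [apply Hsv; auto|]. apply gam_small; auto. split; auto.
              assert ((/4) ^ k <= 1) by (apply pow_quarter_le1). lra. lra.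
    + eapply contrib_mono; [intros x Hx; exact Hx| |apply (contrib_family l _ (fun k => Kc / 4 ^ k * (2 ^ S k - 2 ^ k)) N)].
      * apply fsum_tail; auto.
      * intros k Hk. apply contrib_piece; auto.
        -- apply div_nonneg; auto. left; apply pow_lt; lra.
        -- apply outer_le_interval. simpl. pose proof (pow_lt 2 k ltac:(lra)). lra.
        -- intros x Hx. assert (H1 : 1 <= 2 ^ k) by (apply pow_R1_Rle; lra).
           eapply Rle_trans; [apply Hsv; lra|].
           pose proof (gam_large s x N0 HN1 ltac:(lra) ltac:(lra)). fold Kc in H.
           assert (Hx2 : 4 ^ k <= x ^ 2).
           { replace (4 ^ k) with (2 ^ k * 2 ^ k) by (rewrite <- Rpow_mult_distr; f_equal; lra). simpl. nra. }
           assert (H4 : 0 < 4 ^ k) by (apply pow_lt; lra).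
           pose proof (gam_nonneg s x).
           apply (Rmult_le_reg_r (4 ^ k)); auto. unfold Rdiv. rewrite Rmult_assoc, Rinv_l by lra. nra.
Qed.

Lemma Gamma_nonneg s : 1/2 <= s -> 0 <= Gamma s.
Proof.
  intros Hs. destruct (gamma_bound s Hs) as [B HB].
  unfold Gamma. change (fun t => rpow t (s - 1) * exp (- t)) with (gam s).
  apply (lint_val_bounds _ _ B); auto. intros; apply gam_nonneg.
Qed.

Lemma C_Gamma_nonneg alpha : 1/2 <= alpha -> 0 <= C_Gamma alpha.
Proof.
  intros Ha. unfold C_Gamma.
  pose proof (Gamma_nonneg (alpha + 1) ltac:(lra)).
  pose proof (Gamma_nonneg (1/2) ltac:(lra)).
  pose proof (Gamma_nonneg (alpha + 1/2) ltac:(lra)).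
  pose proof (Rpower_pos 2 (2 * alpha - 1)).
  apply div_nonneg; auto. apply Rmult_le_pos; [apply Rmult_le_pos|]; lra.
Qed.

Lemma G_eq alpha x y z : 0 < x -> 0 < y -> 0 < z ->
  K_alpha alpha x y z * ind01 z * w_alpha alpha z =
  C_Gamma alpha * rpow ((z^2 - (x - y)^2) * ((x + y)^2 - z^2)) (alpha - 1/2) * z
    / (Rpower x (2 * alpha) * Rpower y (2 * alpha)) * ind01 z.
Proof.
  intros Hx Hy Hz. unfold K_alpha, w_alpha.
  rewrite (rpow_pos_eq (x * y * z)) by (apply Rmult_lt_0_compat; [apply Rmult_lt_0_compat|]; auto).
  rewrite (rpow_pos_eq z) by auto.
  rewrite <- (Rpower_mult_distr (x * y) z) by (try apply Rmult_lt_0_compat; auto).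
  rewrite <- (Rpower_mult_distr x y) by auto.
  rewrite Rpower_plus, Rpower_1 by auto.
  pose proof (Rpower_pos x (2 * alpha)). pose proof (Rpower_pos y (2 * alpha)). pose proof (Rpower_pos z (2 * alpha)).
  field. repeat split; lra.
Qed.

Lemma rpow_le_sq P U e : 0 <= e -> 0 < U -> P <= U ^ 2 -> rpow P e <= Rpower U (2 * e).
Proof.
  intros He HU HP. unfold rpow. destruct (Rle_dec P 0) as [|HP0]; [left; apply Rpower_pos|].
  rewrite <- Rpower_mult. replace (Rpower U 2) with (U ^ 2) by (replace 2 with (INR 2) by (simpl; lra); rewrite Rpower_pow; auto).
  apply Rle_Rpower_l; auto. lra.
Qed.

Lemma frac_bound C Q Qb z zb X Xb Y i : 0 <= C -> 0 <= Q <= Qb -> 0 < z <= zb -> 0 < Xb <= X -> 0 < Y ->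
  0 <= i <= 1 -> C * Q * z / (X * Y) * i <= C * Qb * zb / (Xb * Y).
Proof.
  intros HC HQ Hz HX HY Hi. unfold Rdiv.
  assert (0 < / (X * Y)) by (apply Rinv_0_lt_compat; nra).
  assert (/ (X * Y) <= / (Xb * Y)) by (apply Rinv_le_contravar; nra).
  assert (0 <= C * Q * z) by (repeat apply Rmult_le_pos; lra).
  assert (C * Q * z <= C * Qb * zb) by (apply Rmult_le_compat; [apply Rmult_le_pos; lra|lra|apply Rmult_le_compat_l; lra|lra]).
  assert (C * Q * z * / (X * Y) * i <= C * Q * z * / (X * Y)) by (pose proof (Rmult_le_pos _ _ H1 (Rlt_le _ _ H)); nra).
  assert (C * Q * z * / (X * Y) <= C * Qb * zb * / (Xb * Y)) by (apply Rmult_le_compat; lra).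
  lra.
Qed.

Lemma ind01_01 z : 0 <= ind01 z <= 1.
Proof. apply ind_01. Qed.
Lemma ind01_gt1 z : 1 < z -> ind01 z = 0.
Proof. intros. apply ind_out. lra. Qed.

Definition C4 alpha := C_Gamma alpha * Rpower 4 (2 * alpha - 1).
Definition K1 alpha := Rmax 1 (4 * C4 alpha).
Definition K2 alpha := 2 * C_Gamma alpha * Rpower 3 (2 * alpha - 1) * Rpower 2 (2 * alpha - 1).
Definition cy alpha y := if Rlt_dec y 2 then K1 alpha else K2 alpha / Rpower y (2 * alpha + 1).

Definition Gk alpha x y z := K_alpha alpha x y z * ind01 z * w_alpha alpha z.

Lemma Rpower_split x alpha : 0 < x -> Rpower x (2 * alpha) = Rpower x (2 * alpha - 1) * x.
Proof. intros. replace (2 * alpha) with ((2 * alpha - 1) + 1) at 1 by ring. rewrite Rpower_plus, Rpower_1; auto. Qed.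

Lemma Gk_nonneg alpha x y z : 1/2 <= alpha -> 0 < x -> 0 < y -> 0 < z -> 0 <= Gk alpha x y z.
Proof.
  intros Ha Hx Hy Hz. unfold Gk. rewrite G_eq by auto.
  pose proof (C_Gamma_nonneg alpha Ha). pose proof (ind01_01 z).
  pose proof (rpow_nonneg ((z ^ 2 - (x - y) ^ 2) * ((x + y) ^ 2 - z ^ 2)) (alpha - 1/2)).
  pose proof (Rpower_pos x (2 * alpha)). pose proof (Rpower_pos y (2 * alpha)).
  apply Rmult_le_pos; [|lra]. apply div_nonneg.
  - apply Rmult_le_pos; [apply Rmult_le_pos|]; lra.
  - apply Rmult_le_pos; lra.
Qed.

Lemma Gk_gen alpha x y z : 1/2 <= alpha -> 0 < x -> 0 < y -> Rabs (x - y) < z < x + y ->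
  Gk alpha x y z <= C4 alpha * (x + y) / (x * y).
Proof.
  intros Ha Hx Hy Hz.
  assert (Hz0 : 0 < z) by (pose proof (Rabs_pos (x - y)); lra).
  unfold Gk. rewrite G_eq by auto.
  set (a := 2 * alpha - 1).
  assert (Hq : rpow ((z ^ 2 - (x - y) ^ 2) * ((x + y) ^ 2 - z ^ 2)) (alpha - 1/2) <= Rpower (4 * x * y) a).
  { unfold a. replace (2 * alpha - 1) with (2 * (alpha - 1/2)) by field. apply rpow_le_sq; [lra|nra|].
    assert (Hu : 0 <= z ^ 2 - (x - y) ^ 2 <= 4 * x * y).
    { split; [|nra]. assert (Rabs (x - y) ^ 2 = (x - y) ^ 2) by apply pow2_abs.
      pose proof (Rabs_pos (x - y)). nra. }
    assert (Hv : 0 <= (x + y) ^ 2 - z ^ 2 <= 4 * x * y).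
    { split; [nra|]. assert (Rabs (x - y) ^ 2 = (x - y) ^ 2) by apply pow2_abs.
      pose proof (Rabs_pos (x - y)). nra. }
    nra. }
  eapply Rle_trans.
  { apply (frac_bound _ _ (Rpower (4 * x * y) a) z (x + y) _ (Rpower x (2 * alpha))); auto.
    - apply C_Gamma_nonneg; auto.
    - split; [apply rpow_nonneg|auto].
    - lra.
    - split; [apply Rpower_pos|lra].
    - apply Rpower_pos.
    - apply ind01_01. }
  right. unfold C4. fold a.
  rewrite !Rpower_split by auto. fold a.
  rewrite <- !Rpower_mult_distr by lra.
  pose proof (Rpower_pos x a). pose proof (Rpower_pos y a). pose proof (Rpower_pos 4 a).
  field. lra.
Qed.

Lemma Gk_large alpha x y z : 1/2 <= alpha -> 0 < x -> 2 <= y -> Rabs (x - y) < 1 ->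
  Rabs (x - y) < z < x + y -> z <= 1 ->
  Gk alpha x y z <= K2 alpha / Rpower y (2 * alpha + 1).
Proof.
  intros Ha Hx Hy Hxy Hz Hz1.
  assert (Hz0 : 0 < z) by (pose proof (Rabs_pos (x - y)); lra).
  assert (Hx2 : y / 2 <= x) by (apply Rabs_def2 in Hxy; lra).
  assert (Hx3 : x + y <= 3 * y) by (apply Rabs_def2 in Hxy; lra).
  unfold Gk. rewrite G_eq by lra.
  set (a := 2 * alpha - 1).
  assert (Hq : rpow ((z ^ 2 - (x - y) ^ 2) * ((x + y) ^ 2 - z ^ 2)) (alpha - 1/2) <= Rpower (3 * y) a).
  { eapply Rle_trans; [|apply Rle_Rpower_l; [unfold a; lra|split; [|exact Hx3]; lra]].
    unfold a. replace (2 * alpha - 1) with (2 * (alpha - 1/2)) by field. apply rpow_le_sq; [lra|lra|].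
    assert (Habs : Rabs (x - y) ^ 2 = (x - y) ^ 2) by apply pow2_abs.
    pose proof (Rabs_pos (x - y)).
    assert (Hu : 0 <= z ^ 2 - (x - y) ^ 2 <= 1) by (split; nra).
    assert (Hv : 0 <= (x + y) ^ 2 - z ^ 2 <= (x + y) ^ 2) by (split; nra).
    nra. }
  eapply Rle_trans.
  { apply (frac_bound _ _ (Rpower (3 * y) a) z 1 _ (Rpower (y / 2) (2 * alpha))); auto.
    - apply C_Gamma_nonneg; auto.
    - split; [apply rpow_nonneg|auto].
    - split; [apply Rpower_pos|]. apply Rle_Rpower_l; lra.
    - apply Rpower_pos.
    - apply ind01_01. }
  right. unfold K2. fold a.
  replace (2 * alpha + 1) with (a + 1 + 1) by (unfold a; ring).
  rewrite !Rpower_plus, !Rpower_1 by lra.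
  rewrite !Rpower_split by lra. fold a.
  rewrite <- (Rpower_mult_distr 3 y) by lra.
  replace (Rpower y a) with (Rpower (y / 2) a * Rpower 2 a) by (rewrite Rpower_mult_distr by lra; f_equal; field).
  pose proof (Rpower_pos (y/2) a). pose proof (Rpower_pos 2 a). pose proof (Rpower_pos 3 a).
  field. lra.
Qed.

Lemma C4_nonneg alpha : 1/2 <= alpha -> 0 <= C4 alpha.
Proof. intros. unfold C4. pose proof (C_Gamma_nonneg alpha H). pose proof (Rpower_pos 4 (2 * alpha - 1)). nra. Qed.

Lemma K2_nonneg alpha : 1/2 <= alpha -> 0 <= K2 alpha.
Proof.
  intros. unfold K2. pose proof (C_Gamma_nonneg alpha H).
  pose proof (Rpower_pos 3 (2 * alpha - 1)). pose proof (Rpower_pos 2 (2 * alpha - 1)).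
  apply Rmult_le_pos; [apply Rmult_le_pos; [apply Rmult_le_pos|]|]; lra.
Qed.

Lemma cy_ge alpha y : 1/2 <= alpha -> 0 <= cy alpha y /\ (y < 2 -> 1 <= cy alpha y /\ 4 * C4 alpha <= cy alpha y).
Proof.
  intros Ha. unfold cy, K1. destruct (Rlt_dec y 2).
  - pose proof (Rmax_l 1 (4 * C4 alpha)). pose proof (Rmax_r 1 (4 * C4 alpha)). split; [lra|auto].
  - split; [|lra]. apply div_nonneg; [apply K2_nonneg; auto|left; apply Rpower_pos].
Qed.

Lemma ind01_le1 z : ind01 z <= 1.
Proof. apply ind01_01. Qed.

Lemma tau_bound alpha y x : 1/2 <= alpha -> 0 <= y -> 0 <= x ->
  tau_ind01 alpha y x <= cy alpha y /\ (tau_ind01 alpha y x <> 0 -> y - 1 <= x <= y + 1).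
Proof.
  intros Ha Hy Hx. pose proof (cy_ge alpha y Ha) as [Hc0 Hc1].
  unfold tau_ind01. destruct (Req_EM_T y 0) as [Hy0|Hy0].
  - subst y. split.
    + pose proof (ind01_le1 x). destruct (Hc1 ltac:(lra)). lra.
    + intros Hn. destruct (classic (0 <= x <= 1)) as [H|H]; [lra|]. exfalso; apply Hn. apply ind_out; auto.
  - destruct (Req_EM_T x 0) as [Hx0|Hx0].
    + subst x. split.
      * destruct (Rlt_le_dec y 2) as [Hy2|Hy2].
        -- pose proof (ind01_le1 y). destruct (Hc1 Hy2). lra.
        -- rewrite ind01_gt1 by lra. auto.
      * intros Hn. destruct (classic (0 <= y <= 1)) as [H|H]; [lra|]. exfalso; apply Hn. apply ind_out; auto.
    + assert (Hx' : 0 < x) by lra. assert (Hy' : 0 < y) by lra.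
      change (fun z => K_alpha alpha x y z * ind01 z * w_alpha alpha z) with (Gk alpha x y).
      set (D := fun z => Rabs (x - y) < z < x + y).
      assert (HDp : forall z, D z -> 0 < z) by (intros z Hz; unfold D in Hz; pose proof (Rabs_pos (x - y)); lra).
      assert (Hnn : forall z, D z -> 0 <= Gk alpha x y z) by (intros; apply Gk_nonneg; auto).
      assert (Hzero : forall z, 1 < z -> Gk alpha x y z = 0) by (intros z Hz; unfold Gk; rewrite ind01_gt1 by auto; ring).
      destruct (Rle_lt_dec 1 (Rabs (x - y))) as [Hxy|Hxy].
      * assert (HL : lint_le D (Gk alpha x y) (0 * 0)).
        { apply (lint_piece D _ (fun _ => False) 0 0); [lra|apply outer_le_empty; tauto| |tauto].
          intros z Dz Hp. rewrite Hzero in Hp; [lra|]. unfold D in Dz; lra. }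
        pose proof (lint_val_bounds D (Gk alpha x y) _ Hnn HL). split; [lra|]. intros Hn; exfalso; apply Hn. lra.
      * split; [|intros _; apply Rabs_def2 in Hxy; lra].
        destruct (Rlt_le_dec y 2) as [Hy2|Hy2].
        -- assert (HL : lint_le D (Gk alpha x y) (C4 alpha * (x + y) / (x * y) * ((x + y) - Rabs (x - y)))).
           { apply (lint_piece D _ (fun z => Rabs (x - y) <= z <= x + y)).
             - apply div_nonneg; [apply Rmult_le_pos; [apply C4_nonneg; auto|lra]|nra].
             - apply outer_le_interval. apply Rabs_le. split; lra.
             - intros z Dz _. unfold D in Dz. lra.
             - intros z Dz _. apply Gk_gen; auto. }
           pose proof (lint_val_bounds D (Gk alpha x y) _ Hnn HL).
           destruct (Hc1 Hy2).
           assert (Hk : (x + y) * ((x + y) - Rabs (x - y)) <= 4 * (x * y)).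
           { unfold Rabs. destruct (Rcase_abs (x - y)); nra. }
           assert (C4 alpha * (x + y) / (x * y) * ((x + y) - Rabs (x - y)) <= 4 * C4 alpha).
           { replace (C4 alpha * (x + y) / (x * y) * ((x + y) - Rabs (x - y))) with
               (C4 alpha * ((x + y) * ((x + y) - Rabs (x - y)) / (x * y))) by (field; lra).
             pose proof (C4_nonneg alpha Ha).
             assert ((x + y) * ((x + y) - Rabs (x - y)) / (x * y) <= 4).
             { apply (Rmult_le_reg_r (x * y)); [nra|]. unfold Rdiv. rewrite Rmult_assoc, Rinv_l by nra. lra. }
             nra. }
           lra.
        -- assert (HL : lint_le D (Gk alpha x y) (K2 alpha / Rpower y (2 * alpha + 1) * (1 - Rabs (x - y)))).
           { apply (lint_piece D _ (fun z => Rabs (x - y) <= z <= 1)).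
             - apply div_nonneg; [apply K2_nonneg; auto|left; apply Rpower_pos].
             - apply outer_le_interval. lra.
             - intros z Dz Hp. unfold D in Dz. split; [lra|].
               destruct (Rle_lt_dec z 1); auto. rewrite Hzero in Hp; lra.
             - intros z Dz Ez. apply Gk_large; auto; lra. }
           pose proof (lint_val_bounds D (Gk alpha x y) _ Hnn HL).
           unfold cy. destruct (Rlt_dec y 2); [lra|].
           assert (0 <= K2 alpha / Rpower y (2 * alpha + 1)) by (apply div_nonneg; [apply K2_nonneg; auto|left; apply Rpower_pos]).
           pose proof (Rabs_pos (x - y)). nra.
Qed.

Lemma omega_bound alpha n : 1/2 <= alpha -> (1 <= n)%nat ->
  0 <= omega_n alpha n <= Rpower (INR n) (2 * alpha + 1).
Proof.
  intros Ha Hn. unfold omega_n.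
  assert (HnR : 1 <= INR n) by (apply (le_INR 1); auto).
  replace (Rpower (INR n) (2 * alpha + 1)) with (Rpower (INR n) (2 * alpha + 1) * (INR n - (INR n - 1))) by ring.
  apply lint_val_bounds; [intros; apply rpow_nonneg|].
  apply (lint_piece _ _ (fun x => INR n - 1 <= x <= INR n)).
  - left; apply Rpower_pos.
  - apply outer_le_interval; lra.
  - intros x Hx _. unfold I_n in Hx. lra.
  - intros x Hx _. unfold w_alpha, rpow. unfold I_n in Hx. destruct (Rle_dec x 0); [left; apply Rpower_pos|].
    apply Rle_Rpower_l; lra.
Qed.

Definition cyp alpha y := if Rlt_dec y 2 then K1 alpha else (K2 alpha + 1) / Rpower y (2 * alpha + 1).
Definition Kb alpha := Rmax (K1 alpha * Rpower 4 (2 * alpha + 1)) ((K2 alpha + 1) * Rpower 2 (2 * alpha + 1)).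

Lemma cyp_ge alpha y : 1/2 <= alpha -> 0 < cyp alpha y /\ cy alpha y <= cyp alpha y.
Proof.
  intros Ha. pose proof (cy_ge alpha y Ha) as [H0 H1]. unfold cyp, cy in *. destruct (Rlt_dec y 2).
  - destruct (H1 r). split; lra.
  - pose proof (Rpower_pos y (2 * alpha + 1)). pose proof (K2_nonneg alpha Ha). split.
    + apply Rdiv_lt_0_compat; lra.
    + unfold Rdiv. apply Rmult_le_compat_r; [left; apply Rinv_0_lt_compat; lra|lra].
Qed.

Lemma cyp_omega alpha y n : 1/2 <= alpha -> 0 <= y -> (1 <= n)%nat -> INR n <= y + 2 ->
  cyp alpha y * omega_n alpha n <= Kb alpha.
Proof.
  intros Ha Hy Hn Hny. pose proof (omega_bound alpha n Ha Hn) as [Ho1 Ho2].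
  pose proof (cyp_ge alpha y Ha) as [Hc _].
  assert (HnR : 1 <= INR n) by (apply (le_INR 1); auto).
  set (e := 2 * alpha + 1) in *.
  unfold Kb. fold e.
  pose proof (Rmax_l (K1 alpha * Rpower 4 e) ((K2 alpha + 1) * Rpower 2 e)).
  pose proof (Rmax_r (K1 alpha * Rpower 4 e) ((K2 alpha + 1) * Rpower 2 e)).
  unfold cyp in *. fold e in Hc |- *. destruct (Rlt_dec y 2).
  - assert (Rpower (INR n) e <= Rpower 4 e) by (apply Rle_Rpower_l; unfold e; lra).
    assert (K1 alpha * omega_n alpha n <= K1 alpha * Rpower 4 e) by (apply Rmult_le_compat_l; lra). lra.
  - assert (Rpower (INR n) e <= Rpower 2 e * Rpower y e).
    { rewrite Rpower_mult_distr by lra. apply Rle_Rpower_l; unfold e; lra. }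
    pose proof (Rpower_pos y e). pose proof (Rpower_pos 2 e). pose proof (K2_nonneg alpha Ha).
    assert (HH : (K2 alpha + 1) / Rpower y e * omega_n alpha n <= (K2 alpha + 1) / Rpower y e * (Rpower 2 e * Rpower y e))
      by (apply Rmult_le_compat_l; lra).
    replace ((K2 alpha + 1) / Rpower y e * (Rpower 2 e * Rpower y e)) with ((K2 alpha + 1) * Rpower 2 e) in HH by (field; lra).
    lra.
Qed.

Lemma ind_and_P (A P : R -> Prop) x : P x -> ind (fun z => A z /\ P z) x = ind A x.
Proof.
  intros HP. destruct (classic (A x)) as [Ax|Ax].
  - rewrite !ind_in; auto.
  - rewrite !ind_out; tauto.
Qed.

Definition rescale (k : R) (P : R -> Prop) (l : list (R * (R -> Prop))) :=
  map (fun cA => (fst cA / k, fun x => snd cA x /\ P x)) l.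

Lemma sval_rescale k P l x : k <> 0 -> P x -> sval (rescale k P l) x = sval l x / k.
Proof.
  intros Hk HP. induction l as [|[c A] l IH]; [unfold sval; simpl; field; auto|].
  change (sval (rescale k P ((c, A) :: l)) x) with (c / k * ind (fun z => A z /\ P z) x + sval (rescale k P l) x).
  rewrite IH, sval_cons. rewrite (ind_and_P A P x HP). field; auto.
Qed.

Lemma wsum_rescale k P l rs : k <> 0 -> wsum l rs = k * wsum (rescale k P l) rs.
Proof.
  intros Hk. revert rs. induction l as [|[c A] l IH]; intros [|r rs]; unfold wsum; simpl; try ring.
  specialize (IH rs). unfold wsum in IH. rewrite IH. field; auto.
Qed.

Lemma Forall2_rescale k P l rs (Q : (R * (R -> Prop)) -> R -> Prop) :
  Forall2 Q (rescale k P l) rs -> Forall2 (fun cA r => Q (fst cA / k, fun x => snd cA x /\ P x) r) l rs.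
Proof.
  revert rs. induction l as [|a l IH]; intros rs H; inversion H; subst; constructor; auto.
Qed.

Lemma contrib_In alpha p f M y (n : nat) l k :
  (1 <= n)%nat -> 0 < k ->
  (forall x, 0 <= x -> tau_ind01 alpha y x <= k) ->
  validD (fun x => 0 <= x) l ->
  (forall x, 0 <= x -> sval l x <= rpow (Rabs (f x)) p * tau_ind01 alpha y x * w_alpha alpha x) ->
  lint_le (I_n n) (fun x => rpow (Rabs (f x)) p * w_alpha alpha x) (rpow M p * omega_n alpha n) ->
  Contrib l (I_n n) (k * (rpow M p * omega_n alpha n)).
Proof.
  intros Hn Hk Htau Hl Hsv Hlint.
  assert (HnR : 1 <= INR n) by (apply (le_INR 1); auto).
  destruct (Hlint (rescale k (I_n n) l)) as [rs [H1 H2]].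
  - clear Hsv Hlint. unfold validD in *. unfold rescale. apply Forall_map.
    eapply Forall_impl; [|exact Hl]. intros [c A] [Hc [HA HD]]. simpl in *. split; [|split].
    + apply div_nonneg; lra.
    + apply lmeasurable_inter; auto. unfold I_n. apply (lmeasurable_Ico (INR n - 1) (INR n)).
    + tauto.
  - intros x Hx. rewrite sval_rescale by (auto; lra).
    assert (Hx0 : 0 <= x) by (unfold I_n in Hx; lra).
    specialize (Hsv x Hx0). specialize (Htau x Hx0).
    pose proof (rpow_nonneg (Rabs (f x)) p). pose proof (rpow_nonneg x (2 * alpha + 1)).
    unfold w_alpha in *.
    apply (Rmult_le_reg_r k); auto. unfold Rdiv. rewrite Rmult_assoc, Rinv_l by lra.
    assert (rpow (Rabs (f x)) p * tau_ind01 alpha y x * rpow x (2 * alpha + 1) <= rpow (Rabs (f x)) p * k * rpow x (2 * alpha + 1)).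
    { apply Rmult_le_compat_r; auto. apply Rmult_le_compat_l; auto. }
    lra.
  - exists rs. split.
    + apply Forall2_rescale in H1. eapply Forall2_impl; [|exact H1]. simpl. intros [c A] r [Z|O]; simpl in *.
      * left. apply (Rmult_eq_reg_r (/ k)); [|apply Rinv_neq_0_compat; lra]. unfold Rdiv in Z. lra.
      * right. exact O.
    + rewrite (wsum_rescale k (I_n n)) by lra. change (fold_right Rplus 0 (map (fun p0 => fst (fst p0) * snd p0) (combine (rescale k (I_n n) l) rs))) with (wsum (rescale k (I_n n) l) rs) in H2.
      apply Rmult_le_compat_l; lra.
Qed.

Lemma nat_floor y : 0 <= y -> exists q : nat, INR q <= y < INR q + 1.
Proof.
  intros Hy. destruct (archimed y) as [H1 H2].
  assert (Hk : (0 < up y)%Z) by (apply lt_IZR; lra).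
  exists (Z.to_nat (up y - 1)). rewrite INR_IZR_INZ, Z2Nat.id by lia. rewrite minus_IZR. simpl. lra.
Qed.

Lemma Kb_nonneg alpha : 1/2 <= alpha -> 0 <= Kb alpha.
Proof.
  intros Ha. unfold Kb. eapply Rle_trans; [|apply Rmax_l].
  pose proof (cy_ge alpha 0 Ha) as [_ H]. destruct (H ltac:(lra)). unfold cy in H0.
  destruct (Rlt_dec 0 2); [|lra]. pose proof (Rpower_pos 4 (2 * alpha + 1)). nra.
Qed.

Theorem mainTheorem3 (alpha p : R) :
  1/2 <= alpha -> 1 <= p ->
  exists C : R, 0 < C /\
    forall f : R -> R, measurable_Rplus f ->
    forall M : R, 0 <= M -> norm_p_inf_le alpha p f M ->
    forall y : R, 0 <= y ->
      lint_le (fun x => 0 <= x)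
        (fun x => rpow (Rabs (f x)) p * tau_ind01 alpha y x * w_alpha alpha x)
        (rpow (C * M) p).
Proof.
  intros Ha Hp.
  pose proof (Kb_nonneg alpha Ha) as HKb.
  set (Kt := 3 * Kb alpha + 1).
  exists (Rpower Kt (/ p)). split; [apply Rpower_pos|].
  intros f _ M HM Hnorm y Hy.
  assert (HCM : rpow (Rpower Kt (/ p) * M) p = Kt * rpow M p).
  { destruct (Req_dec M 0) as [->|HM0].
    - unfold rpow. rewrite Rmult_0_r. destruct (Rle_dec 0 0); [ring|lra].
    - assert (0 < M) by (destruct HM; [auto|congruence]).
      rewrite !rpow_pos_eq by (try apply Rmult_lt_0_compat; try apply Rpower_pos; lra).
      rewrite <- Rpower_mult_distr by (try apply Rpower_pos; lra).
      rewrite Rpower_mult. replace (/ p * p) with 1 by (field; lra). rewrite Rpower_1 by (unfold Kt; lra). reflexivity. }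
  rewrite HCM.
  set (k := cyp alpha y).
  destruct (cyp_ge alpha y Ha) as [Hk0 Hk1]. fold k in Hk0, Hk1.
  assert (Htau : forall x, 0 <= x -> tau_ind01 alpha y x <= k).
  { intros x Hx. destruct (tau_bound alpha y x Ha Hy Hx). lra. }
  destruct (nat_floor y Hy) as [q Hq].
  set (n1 := Nat.max 1 q). set (n2 := S q). set (n3 := S (S q)).
  assert (Hn1 : (1 <= n1)%nat) by (unfold n1; lia).
  assert (Hn2 : (1 <= n2)%nat) by (unfold n2; lia).
  assert (Hn3 : (1 <= n3)%nat) by (unfold n3; lia).
  assert (Hb1 : INR n1 <= y + 2).
  { unfold n1. destruct (Nat.le_ge_cases 1 q).
    - rewrite Nat.max_r by auto. lra.
    - rewrite Nat.max_l by auto. simpl. lra. }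
  assert (Hb2 : INR n2 <= y + 2) by (unfold n2; rewrite S_INR; lra).
  assert (Hb3 : INR n3 <= y + 2) by (unfold n3; rewrite !S_INR; lra).
  pose proof (rpow_nonneg M p) as HRM.
  assert (HO : forall n, (1 <= n)%nat -> INR n <= y + 2 -> k * (rpow M p * omega_n alpha n) <= rpow M p * Kb alpha).
  { intros n H1 H2. pose proof (cyp_omega alpha y n Ha Hy H1 H2). fold k in H.
    replace (k * (rpow M p * omega_n alpha n)) with (rpow M p * (k * omega_n alpha n)) by ring.
    apply Rmult_le_compat_l; auto. }
  apply (lint_le_weaken _ _ (k * (rpow M p * omega_n alpha n1) + (k * (rpow M p * omega_n alpha n2) + k * (rpow M p * omega_n alpha n3)))).
  { pose proof (HO n1 Hn1 Hb1). pose proof (HO n2 Hn2 Hb2). pose proof (HO n3 Hn3 Hb3). unfold Kt. lra. }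
  apply lint_of_contrib. intros l Hl Hsv.
  exists (fun x => I_n n1 x \/ (I_n n2 x \/ I_n n3 x)). split.
  - intros x Hx Hp0.
    assert (Hne : tau_ind01 alpha y x <> 0).
    { intros Hz. specialize (Hsv x Hx). rewrite Hz in Hsv. lra. }
    destruct (tau_bound alpha y x Ha Hy Hx) as [_ Hs]. specialize (Hs Hne).
    unfold I_n. destruct (Rlt_le_dec x (INR q)) as [H1|H1].
    + left. assert (Hq1 : (1 <= q)%nat) by (destruct q; [simpl in H1; lra|lia]).
      unfold n1. rewrite Nat.max_r by auto. lra.
    + destruct (Rlt_le_dec x (INR q + 1)) as [H2|H2].
      * right; left. unfold n2. rewrite S_INR. lra.
      * right; right. unfold n3. rewrite !S_INR. lra.
  - apply contrib_union; [|apply contrib_union].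
    all: apply (contrib_In alpha p f M y); auto; apply Hnorm; auto.
Qed.
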